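(* Let $X$ be a real reflexive Banach space and $f:X\to\mathbb{R}\cup\{+\infty\}$ a lower semicontinuous proper convex function, and let $T=\partial f$. Then for every $\epsilon\ge0$ and $x\in X$, $\breve{T}_{\mathcal{F}_{\partial f}}(\tfrac{\epsilon}{2},x)\subset T^{\mathrm{SE}}(\epsilon,x)$.
   Context: $X^{\ast}$ is the dual of $X$ with pairing $\langle\cdot,\cdot\rangle$; $\partial f$ is the convex subdifferential of $f$. The dual of $X\times X^{\ast}$ is identified with $X^{\ast}\times X$ via $\langle (x,x^{\ast}),(y^{\ast},y)\rangle=\langle x,y^{\ast}\rangle+\langle y,x^{\ast}\rangle$; for $g:X\times X^{\ast}\to\mathbb{R}\cup\{+\infty\}$, $g^{\ast}(y^{\ast},y)=\sup_{(x,x^{\ast})}\{\langle x,y^{\ast}\rangle+\langle y,x^{\ast}\rangle-g(x,x^{\ast})\}$. The Fitzpatrick function of $T$ is $\mathcal{F}_T(x,x^{\ast})=\sup\{\langle y,x^{\ast}\rangle+\langle x-y,y^{\ast}\rangle:(y,y^{\ast})\in\mathrm{gph}(T)\}$. For $\eta\ge0$, $\partial_\eta g(z)$ is the set of $(y^{\ast},y)\in X^{\ast}\times X$ with $g(w,w^{\ast})\ge g(z)+\langle (w,w^{\ast})-z,(y^{\ast},y)\rangle-\eta$ for all $(w,w^{\ast})$ when $g(z)<\infty$, and $\emptyset$ otherwise; $\breve{T}_g(\epsilon,x):=\{x^{\ast}:(x^{\ast},x)\in\partial_{2\epsilon}g(x,x^{\ast})\}$. The smallest enlargement of $T$ is $T^{\mathrm{SE}}(\epsilon,x):=\{x^{\ast}:\mathcal{F}_T^{\ast}(x^{\ast},x)\le\langle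 x,x^{\ast}\rangle+\epsilon\}$. *)

(* Defs.v *)
From HB Require Import structures.
From mathcomp Require Import all_boot all_order all_algebra.
From mathcomp Require Import all_classical all_reals all_analysis.
Set Implicit Arguments. Unset Strict Implicit. Unset Printing Implicit Defensive.
Import Order.TTheory GRing.Theory Num.Theory.
Local Open Scope classical_set_scope.
Local Open Scope ring_scope.

Section Defs.
Context {R : realType} {X : normedModType R}.

Record dual := Dual {
  dfun :> X -> R;
  dlin : forall (a : R) (x y : X), dfun (a *: x + y) = a * dfun x + dfun y;
  dcont : continuous (dfun : X -> R^o) }.

(* A functional
   phi on X^* is bounded iff there is C with |phi x*| <= C * M whenever
   |x* x| <= M * ||x|| for all x. *)
Definition reflexive_space : Prop :=
  forall phi : dual -> R,
    (forall (a : R) (u v w : dual), (forall x, w x = a * u x + v x) ->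
        phi w = a * phi u + phi v) ->
    (exists C : R, forall (u : dual) (M : R), 0 <= M ->
        (forall x, `|u x| <= M * `|x|) -> `|phi u| <= C * M) ->
    exists x : X, forall u : dual, phi u = u x.

Local Open Scope ereal_scope.

Definition proper_fun (f : X -> \bar R) : Prop :=
  (forall x, f x != -oo) /\ (exists x, f x != +oo).

Definition convex_fun (f : X -> \bar R) : Prop :=
  forall (x y : X) (t : R), (0 < t < 1)%R ->
    f (t *: x + (1 - t) *: y)%R <= t%:E * f x + (1 - t)%:E * f y.

Definition subdiff (f : X -> \bar R) (x : X) : set dual :=
  [set u | f x \is a fin_num /\ forall y, f x + (u y - u x)%:E <= f y].

Definition fitzpatrick (T : X -> set dual) (p : X * dual) : \bar R :=
  ereal_sup [set r | exists y : X, exists v : dual,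
    T y v /\ r = ((p.2 y) + (v p.1 - v y))%:E].

Definition pairing (p : X * dual) (q : dual * X) : R := q.1 p.1 + p.2 q.2.

Definition conjugate (g : X * dual -> \bar R) (q : dual * X) : \bar R :=
  ereal_sup [set (pairing p q)%:E - g p | p in [set: X * dual]].

Definition eps_subdiff (g : X * dual -> \bar R) (eta : R) (z : X * dual)
  : set (dual * X) :=
  [set q | g z < +oo /\ forall w : X * dual,
     g z + (pairing w q - pairing z q)%:E - eta%:E <= g w].

Definition Tbreve (g : X * dual -> \bar R) (eps : R) (x : X) : set dual :=
  [set u | eps_subdiff g (2 * eps) (x, u) (u, x)].

Definition TSE (T : X -> set dual) (eps : R) (x : X) : set dual :=
  [set u | conjugate (fitzpatrick T) (u, x) <= (u x + eps)%:E].

End Defs.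
Arguments dual {R} X.

(* Main.v *)
Require Import Defs.
From HB Require Import structures.
From mathcomp Require Import all_boot all_order all_algebra.
From mathcomp Require Import all_classical all_reals all_analysis.
From mathcomp Require Import ring lra.
Import Order.TTheory GRing.Theory Num.Theory.
Local Open Scope classical_set_scope.
Local Open Scope ring_scope.
Set Implicit Arguments. Unset Strict Implicit. Unset Printing Implicit Defensive.
Local Open Scope ring_scope.

Section HahnBanach.
Variables (R : realType) (V : lmodType R) (h : V -> R).
Hypothesis hconv : forall (x y : V) (t : R), 0 < t < 1 ->
  h (t *: x + (1 - t) *: y) <= t * h x + (1 - t) * h y.
Hypothesis h0 : 0 <= h 0.

Definition goodA (A : set (V * R)) :=
  [/\ (forall a d r d' r', A (d, r) -> A (d', r') -> A (a *: d + d', a * r + r')),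
      (forall d r r', A (d, r) -> A (d, r') -> r = r') &
      (forall d r, A (d, r) -> r <= h d)].

Lemma goodA_chain (F : set (set (V * R))) : F `<=` goodA -> total_on F subset ->
  goodA (\bigcup_(X in F) X).
Proof.
move=> FP tot; split.
- move=> a d r d' r' [X1 F1 H1] [X2 F2 H2].
  have [S12|S21] := tot _ _ F1 F2.
  + have [c _ _] := FP _ F2; exists X2 => //; exact: c _ _ _ _ _ (S12 _ H1) H2.
  + have [c _ _] := FP _ F1; exists X1 => //; exact: c _ _ _ _ _ H1 (S21 _ H2).
- move=> d r r' [X1 F1 H1] [X2 F2 H2].
  have [S12|S21] := tot _ _ F1 F2.
  + have [_ f _] := FP _ F2; exact: f _ _ _ (S12 _ H1) H2.
  + have [_ f _] := FP _ F1; exact: f _ _ _ H1 (S21 _ H2).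
- move=> d r [X1 F1 H1]; have [_ _ b] := FP _ F1; exact: b.
Qed.

Lemma goodA0 : goodA [set (0, 0)].
Proof.
split.
- by move=> a d r d' r' [-> ->] [-> ->]; rewrite scaler0 addr0 mulr0 addr0.
- by move=> d r r' [_ ->] [_ ->].
- by move=> d r [-> ->].
Qed.

Lemma goodA_has0 A : goodA A -> (exists p, A p) -> A (0, 0).
Proof.
move=> [c _ _] [[d r] H]; have := c (-1) d r d r H H.
by rewrite scaleN1r mulN1r !addNr.
Qed.

Lemma goodA_ext A d0 : goodA A -> A (0, 0) -> ~ (exists r, A (d0, r)) ->
  exists B, goodA B /\ A `<` B.
Proof.
move=> [cl fu dom] A0 nd0.
pose Lo := [set x | exists d r b, [/\ A (d, r), 0 < b & x = (r - h (d - b *: d0)) / b]].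
pose Up := [set x | exists d r a, [/\ A (d, r), 0 < a & x = (h (d + a *: d0) - r) / a]].
have key : forall l u, Lo l -> Up u -> l <= u.
  move=> _ _ [d1 [r1 [b [A1 b0 ->]]]] [d2 [r2 [a [A2 a0 ->]]]].
  have ab0 : 0 < a + b by rewrite addr_gt0.
  pose t := a / (a + b).
  have t01 : 0 < t < 1.
    rewrite /t; apply/andP; split; first by rewrite divr_gt0.
    by rewrite ltr_pdivrMr // mul1r ltrDl.
  have Am : A ((a / (a + b)) *: d1 + (b / (a + b)) *: d2,
               (a / (a + b)) * r1 + (b / (a + b)) * r2).
    apply: (cl) => //; have := cl (b / (a + b)) d2 r2 0 0 A2 A0.
    by rewrite addr0 addr0.
  have := dom _ _ Am.
  have -> : (a / (a + b)) *: d1 + (b / (a + b)) *: d2 =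
     t *: (d1 - b *: d0) + (1 - t) *: (d2 + a *: d0).
    rewrite /t !scalerDr !scalerN !scalerA.
    have -> : 1 - a / (a + b) = b / (a + b).
      by field; rewrite lt0r_neq0.
    have -> : a / (a + b) * b = b / (a + b) * a by ring.
    by rewrite addrACA addNr addr0.
  move=> /le_trans /(_ (hconv _ _ t01)).
  have -> : 1 - t = b / (a + b).
    by rewrite /t; field; rewrite lt0r_neq0.
  rewrite /t => H.
  rewrite ler_pdivrMr // mulrAC ler_pdivlMr //.
  have H2 : a * r1 + b * r2 <= a * h (d1 - b *: d0) + b * h (d2 + a *: d0).
    have E x y : a / (a + b) * x + b / (a + b) * y = (a * x + b * y) / (a + b).
      by field; rewrite lt0r_neq0.
    by move: H; rewrite !E ler_pM2r ?invr_gt0.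
  nra.
have Lo0 : Lo (- h (- d0)).
  exists 0, 0, 1; split => //; by rewrite sub0r scale1r divr1 sub0r.
have Up0 : Up (h d0).
  exists 0, 0, 1; split => //; by rewrite add0r scale1r divr1 subr0.
have Loub : has_ubound Lo by exists (h d0) => l Ll; exact: key.
pose c := sup Lo.
have cLo : forall l, Lo l -> l <= c by move=> l Ll; exact: ub_le_sup.
have cUp : forall u, Up u -> c <= u.
  by move=> u Uu; apply: ge_sup; [exists (- h (- d0)) | move=> l Ll; exact: key].
pose B := [set p : V * R | exists d r a, A (d, r) /\ p = (d + a *: d0, r + a * c)].
exists B; split; last first.
  split.
    by move=> [d r] Ad; exists d, r, 0; rewrite scale0r mul0r !addr0.
  move=> /(_ (d0, c)) BA; apply: nd0; exists c; apply: BA.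
  by exists 0, 0, 1; rewrite scale1r mul1r !add0r.
split.
- move=> a _ _ _ _ [d1 [r1 [a1 [A1 [-> ->]]]]] [d2 [r2 [a2 [A2 [-> ->]]]]].
  exists (a *: d1 + d2), (a * r1 + r2), (a * a1 + a2); split; first exact: cl.
  congr (_, _).
    by rewrite scalerDr scalerA scalerDl addrACA.
  by ring.
- move=> d r r' [d1 [r1 [a1 [A1 [E1 ->]]]]] [d2 [r2 [a2 [A2 [E2 ->]]]]].
  have [a12|a12] := eqVneq a1 a2.
    subst a2; rewrite E1 in E2; have ed : d1 = d2 by apply: (addIr (a1 *: d0)).
    by subst d2; rewrite (fu _ _ _ A1 A2).
  exfalso; apply: nd0; exists ((r2 - r1) / (a1 - a2)).
  have E : d1 + a1 *: d0 = d2 + a2 *: d0 by rewrite -E1 -E2.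
  have D : d2 - d1 = (a1 - a2) *: d0.
    rewrite scalerBl; apply: (addIr (a2 *: d0)); rewrite subrK; apply: (addrI d1).
    by rewrite addrA [d1 + (d2 - d1)]addrC subrK E.
  have A21 : A (d2 - d1, r2 - r1).
    by have := cl (-1) d1 r1 d2 r2 A1 A2; rewrite scaleN1r mulN1r addrC [- r1 + _]addrC.
  have := cl ((a1 - a2)^-1) _ _ 0 0 A21 A0.
  rewrite D scalerA mulVf ?subr_eq0 // scale1r !addr0 mulrC //.
- move=> _ _ [d [r [a [Ad [-> ->]]]]].
  have [a0|a0|->] := ltgtP a 0.
  + have : Lo ((r - h (d - (- a) *: d0)) / (- a)).
      by exists d, r, (- a); split => //; rewrite oppr_gt0.
    move=> /cLo; rewrite scaleNr opprK ler_pdivrMr ?oppr_gt0 // => H; nra.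
  + have : Up ((h (d + a *: d0) - r) / a) by exists d, r, a.
    move=> /cUp; rewrite ler_pdivlMr // => H; nra.
  + by rewrite scale0r mul0r !addr0; exact: dom.
Qed.

Theorem hahn_banach_convex : exists w : V -> R,
  (forall a x y, w (a *: x + y) = a * w x + w y) /\ (forall x, w x <= h x).
Proof.
have [A [PA Amax]] := Zorn_bigcup goodA_chain.
have tot : forall d, exists r, A (d, r).
  move=> d; apply: contrapT => nd.
  have [[p Ap]|nA] := pselect (exists p, A p).
    have [B [PB AB]] := goodA_ext PA (goodA_has0 PA (ex_intro _ p Ap)) nd.
    exact: Amax AB PB.
  apply: (Amax [set (0, 0)]) goodA0; split.
    by move=> p Ap; exfalso; apply: nA; exists p.
  by move=> /(_ (0, 0) erefl) A0; apply: nA; exists (0, 0).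
pose w d := xget 0 [set r | A (d, r)].
have wA d : A (d, w d) by exact: (xgetPex 0 (tot d)).
have [cl fu dom] := PA.
exists w; split; last by move=> x; exact: dom.
move=> a x y; apply: (fu _ _ _ (wA _)); exact: cl.
Qed.
End HahnBanach.

Section Sandwich.
Variables (R : realType) (X : normedModType R).
Variables (psi : X -> \bar R) (U : X -> R) (L : R).
Hypothesis psiconv : forall (x y : X) (t : R), 0 < t < 1 ->
  (psi (t *: x + (1 - t) *: y)%R <= t%:E * psi x + (1 - t)%R%:E * psi y)%E.
Hypothesis psi0 : psi 0 = 0%E.
Hypothesis Uconv : forall (x y : X) (t : R), 0 < t < 1 ->
  U (t *: x + (1 - t) *: y) <= t * U x + (1 - t) * U y.
Hypothesis U0 : U 0 = 0.
Hypothesis Ulip : forall x y, U x - U y <= L * `|x - y|.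
Hypothesis psiU : forall d, ((- U (- d))%:E <= psi d)%E.

Let E d := [set fine (psi e) + U (d - e) | e in [set e | psi e \is a fin_num]].
Let h d := inf (E d).

Let E0 d : E d (U d).
Proof. by exists 0; rewrite /= psi0 // add0r subr0. Qed.

Let Elb d : lbound (E d) (- (L * `|d|)).
Proof.
move=> _ [e /= fe <-].
have H1 : - U (- e) <= fine (psi e) by rewrite -lee_fin fineK.
have H2 := Ulip (- e) (d - e).
have : `|- e - (d - e)| = `|d| by rewrite opprB addKr normrN.
move=> N; rewrite N in H2; lra.
Qed.

Let hinf d : has_lbound (E d).
Proof. by exists (- (L * `|d|)); exact: Elb. Qed.

Let h_le d e : psi e \is a fin_num -> h d <= fine (psi e) + U (d - e).
Proof. by move=> fe; apply: ge_inf => //; exists e. Qed.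

Lemma hU d : h d <= U d.
Proof. by have := h_le d (e:=0); rewrite psi0 subr0 /= add0r; apply. Qed.

Lemma hpsi d : ((h d)%:E <= psi d)%E.
Proof.
have [fd|] := boolP (psi d \is a fin_num).
  by rewrite -(fineK fd) lee_fin; have := h_le d fd; rewrite subrr U0 addr0.
rewrite fin_numE negb_and !negbK => /orP[/eqP pd|/eqP ->]; last exact: leey.
by have := psiU d; rewrite pd leeNy_eq.
Qed.

Lemma h0 : 0 <= h 0.
Proof.
apply: lb_le_inf; first by exists (U 0); exact: E0.
move=> _ [e /= fe <-]; rewrite sub0r.
have := psiU e; rewrite -(fineK fe) lee_fin; lra.
Qed.

Lemma hconv (x y : X) (t : R) : 0 < t < 1 ->
  h (t *: x + (1 - t) *: y) <= t * h x + (1 - t) * h y.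
Proof.
move=> /andP[t0 t1]; have t1' : 0 < 1 - t by rewrite subr_gt0.
set z := t *: x + (1 - t) *: y.
have claim : forall e1 e2, psi e1 \is a fin_num -> psi e2 \is a fin_num ->
    h z <= t * (fine (psi e1) + U (x - e1)) + (1 - t) * (fine (psi e2) + U (y - e2)).
  move=> e1 e2 f1 f2; set e := t *: e1 + (1 - t) *: e2.
  have pe := psiconv e1 e2 (t:=t); rewrite t0 t1 /= in pe; have {}pe := pe isT.
  have fe : psi e \is a fin_num.
    rewrite fin_numE; apply/andP; split.
      by apply/eqP => pm; have := psiU e; rewrite pm leeNy_eq.
    apply/eqP => pp; move: pe; rewrite pp -(fineK f1) -(fineK f2) -!EFinM -EFinD.
    by rewrite leye_eq.
  have pe' : fine (psi e) <= t * fine (psi e1) + (1 - t) * fine (psi e2).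
    by rewrite -lee_fin fineK // EFinD !EFinM !fineK.
  have ze : z - e = t *: (x - e1) + (1 - t) *: (y - e2).
    by rewrite /z /e !scalerBr opprD addrACA.
  have := h_le z fe; rewrite ze => H.
  have := Uconv (x - e1) (y - e2) (t:=t); rewrite t0 t1 => /(_ isT) H2.
  nra.
have step1 : forall e2, psi e2 \is a fin_num ->
    h z <= t * h x + (1 - t) * (fine (psi e2) + U (y - e2)).
  move=> e2 f2.
  suff : (h z - (1 - t) * (fine (psi e2) + U (y - e2))) / t <= h x.
    by rewrite ler_pdivrMr // => H; nra.
  apply: lb_le_inf; first by exists (U x); exact: E0.
  move=> _ [e1 /= f1 <-]; rewrite ler_pdivrMr //; have := claim e1 e2 f1 f2; nra.
suff : (h z - t * h x) / (1 - t) <= h y.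
  by rewrite ler_pdivrMr // => H; nra.
apply: lb_le_inf; first by exists (U y); exact: E0.
move=> _ [e2 /= f2 <-]; rewrite ler_pdivrMr //; have := step1 e2 f2; nra.
Qed.

Theorem sandwich : exists w : X -> R,
  [/\ (forall a x y, w (a *: x + y) = a * w x + w y),
      (forall d, ((w d)%:E <= psi d)%E) & (forall d, w d <= U d)].
Proof.
have [w [wl wh]] := hahn_banach_convex hconv h0.
exists w; split => //.
- move=> d; apply: le_trans (hpsi d); rewrite lee_fin; exact: wh.
- move=> d; apply: le_trans (hU d); exact: wh.
Qed.
End Sandwich.

Lemma small_inv (R : realType) (e : R) : 0 < e -> exists N : nat, (N.+1%:R)^-1 < e.
Proof.
move=> e0; exists (Num.bound (e^-1)).
have ie : 0 <= e^-1 by rewrite invr_ge0 ltW.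
have := archi_boundP ie; set N := Num.bound _ => H.
rewrite -[e]invrK ltf_pV2 ?posrE ?invr_gt0 ?ltr0n //; apply: lt_le_trans H _.
by rewrite ler_nat.
Qed.

Lemma ereal_dense (R : realType) (a : R) (x : \bar R) : (a%:E < x)%E ->
  exists c : R, a < c /\ (c%:E < x)%E.
Proof.
case: x => [r| |] //=.
- rewrite lte_fin => ar; exists ((a + r) / 2); split; rewrite ?lte_fin; lra.
- by move=> _; exists (a + 1); split; [lra | exact: ltry].
Qed.

Section LSC.
Variables (R : realType) (X : normedModType R).

Lemma lsc_addLip (phi : X -> \bar R) (g : X -> R) (K : R) : 0 < K ->
  lower_semicontinuous phi -> (forall x y, `|g x - g y| <= K * `|x - y|) ->
  lower_semicontinuous (fun z => phi z + (g z)%:E)%E.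
Proof.
move=> K0 lphi gL x a.
have [px|] := boolP (phi x == -oo)%E.
  by rewrite (eqP px) /= ltNge leNye.
move=> pxNy ax.
have : ((a - g x)%R%:E < phi x)%E.
  move: ax; case: (phi x) pxNy => [r| |] //= _; [rewrite -EFinD !lte_fin; lra | by move=> _; exact: ltry].
move=> /ereal_dense [c [ac cx]].
have [V Vx HV] := lphi x c cx.
exists (V `&` ball x ((c - (a - g x)) / K)).
  apply: filterI => //; apply: nbhsx_ballx; apply: divr_gt0 => //; lra.
move=> y [Vy bxy]; have := HV y Vy.
have := gL x y; rewrite -ball_normE /ball_ /= in bxy.
move: bxy; rewrite ltr_pdivlMr // => bxy H1.
case: (phi y) => [r| |] //= cr; last exact: ltry.
rewrite lte_fin in cr; rewrite -EFinD lte_fin.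
have : `|g x - g y| < c - (a - g x) by lra.
move=> /(le_lt_trans (ler_norm _)) => H; lra.
Qed.

Lemma lsc_closed (F : X -> \bar R) (c : R) : lower_semicontinuous F ->
  closed [set z | (F z <= c%:E)%E].
Proof.
move=> /lower_semicontinuousP /(_ c) /open_closedC H.
suff -> : [set z | (F z <= c%:E)%E] = ~` [set x | (c%:E < F x)%E] by [].
apply/seteqP; split => z /=; rewrite ltNge.
  by move=> H1; apply/negP; rewrite negbK.
by move=> /negP; rewrite negbK.
Qed.
End LSC.

Section Ekeland.
Variables (R : realType) (X : completeNormedModType R) (phi : X -> \bar R).
Variables (lam b : R) (y0 : X).
Hypothesis lam0 : 0 < lam.
Hypothesis lphi : lower_semicontinuous phi.
Hypothesis phib : forall y, (b%:E <= phi y)%E.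
Hypothesis fy0 : phi y0 \is a fin_num.

Let S y := [set z | (phi z + (lam * `|z - y|)%:E <= phi y)%E].

Let S_refl y : S y y.
Proof. by rewrite /S /= subrr normr0 mulr0 adde0. Qed.

Let S_fin y z : phi y \is a fin_num -> S y z -> phi z \is a fin_num.
Proof.
rewrite /S /= !fin_numE; have := phib z; case: (phi y) => [ry| |] //;
  case: (phi z) => [rz| |] //.
Qed.

Let S_trans y w z : S y w -> S w z -> S y z.
Proof.
move=> Sw Sz; have [fy|] := boolP (phi y \is a fin_num).
  have fw := S_fin fy Sw; have fz := S_fin fw Sz.
  move: Sw Sz; rewrite /S /= -(fineK fy) -(fineK fw) -(fineK fz) -!EFinD !lee_fin.
  move=> H1 H2.
  have := ler_normD (z - w) (w - y); rewrite addrA subrK => H3.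
  have : lam * `|z - y| <= lam * (`|z - w| + `|w - y|) by rewrite ler_pM2l.
  lra.
rewrite fin_numE negb_and !negbK => /orP[/eqP h|/eqP h].
  by have := phib y; rewrite h.
by rewrite /S /= h leey.
Qed.

Let S_closed y : phi y \is a fin_num -> closed (S y).
Proof.
move=> fy; rewrite /S -(fineK fy).
apply: lsc_closed; apply: (@lsc_addLip _ _ phi (fun z => lam * `|z - y|) lam) => //.
move=> u v; rewrite -mulrBr normrM gtr0_norm // ler_pM2l //.
apply: le_trans (ler_dist_dist _ _) _.
by rewrite opprB addrA subrK.
Qed.

Let Vals y := [set fine (phi z) | z in S y].

Let Vals_inf y : phi y \is a fin_num -> has_inf (Vals y).
Proof.
move=> fy; split; first by exists (fine (phi y)), y.
exists b => _ [z Sz <-]; have fz := S_fin fy Sz.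
by rewrite -lee_fin fineK.
Qed.

Let iy y := inf (Vals y).

Let nextP n y : phi y \is a fin_num ->
  exists z, S y z /\ fine (phi z) < iy y + (n.+1%:R)^-1.
Proof.
move=> fy; have ni : 0 < (n.+1%:R : R)^-1 by rewrite invr_gt0 ltr0Sn.
have [_ [z Sz <-] H] := inf_adherent ni (Vals_inf fy).
by exists z.
Qed.

Let next n y := xget y [set z | S y z /\ fine (phi z) < iy y + (n.+1%:R)^-1].

Fixpoint ys n := if n is m.+1 then next m (ys m) else y0.

Let ys_prop n : phi (ys n) \is a fin_num /\
   (S (ys n) (ys n.+1) /\ fine (phi (ys n.+1)) < iy (ys n) + (n.+1%:R)^-1).
Proof.
elim: n => [|n [fn Pn]].
  by split => //; exact: (xgetPex y0 (nextP 0 fy0)).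
have fn1 : phi (ys n.+1) \is a fin_num by exact: S_fin fn Pn.1.
by split => //; exact: (xgetPex (ys n.+1) (nextP n.+1 fn1)).
Qed.

Let ys_fin n : phi (ys n) \is a fin_num. Proof. exact: (ys_prop n).1. Qed.

Let ys_nest n m : (n <= m)%N -> S (ys n) (ys m).
Proof.
elim: m => [|m IH]; first by rewrite leqn0 => /eqP ->; exact: S_refl.
rewrite leq_eqVlt => /orP[/eqP ->|]; first exact: S_refl.
rewrite ltnS => /IH H; apply: S_trans H _; exact: (ys_prop m).2.1.
Qed.

Let small n z : S (ys n.+1) z -> lam * `|z - ys n.+1| < (n.+1%:R)^-1.
Proof.
move=> Sz; have Snz : S (ys n) z := S_trans (ys_prop n).2.1 Sz.
have fz := S_fin (ys_fin n) Snz.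
have H1 : iy (ys n) <= fine (phi z).
  by apply: ge_inf; [exact: (Vals_inf (ys_fin n)).2 | exists z].
have H2 := (ys_prop n).2.2.
move: Sz; rewrite /S /= -[next n (ys n)]/(ys n.+1) -(fineK fz) -(fineK (ys_fin n.+1)) -EFinD lee_fin.
move: H1 H2; set t := (n.+1%:R^-1 : R); set u := lam * _; set v := iy _.
move=> H1 H2 H3; lra.
Qed.

Theorem ekeland_weak : exists ys0, phi ys0 \is a fin_num /\
  forall y, (phi ys0 <= phi y + (lam * `|y - ys0|)%:E)%E.
Proof.
have cauchy_ys : cauchy_ex (ys @ \oo).
  move=> e e0; have [N HN] := small_inv (mulr_gt0 lam0 e0).
  exists (ys N.+1); exists N.+1 => // m /= Hm.
  rewrite -ball_normE /ball_ /= distrC.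
  have H := small (ys_nest Hm); rewrite -(ltr_pM2l lam0).
  move: H HN; set t := (N.+1%:R^-1 : R); set u := lam * _; move=> H HN; lra.
have cv : cvg (ys @ \oo) by apply: cauchy_cvg; exact: cauchy_exP.
set ystar := lim (ys @ \oo).
have inS n : S (ys n) ystar.
  apply: (closed_cvg _ (S_closed (ys_fin n))) cv.
  by exists n => // m /= Hm; exact: ys_nest.
have fstar : phi ystar \is a fin_num by exact: S_fin (ys_fin 0) (inS 0).
exists ystar; split => // z.
have [Sz|nSz] := pselect (S ystar z); last first.
  move: nSz; rewrite /S /= => /negP; rewrite -ltNge => /ltW.
  by rewrite addeC.
suff -> : z = ystar by rewrite subrr normr0 mulr0 adde0.
apply/eqP; rewrite -subr_eq0 -normr_eq0; apply/negPn/negP => dn0.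
have d0 : 0 < `|z - ystar| by rewrite lt0r normr_ge0 dn0.
have e0 : 0 < lam * `|z - ystar| / 2 by rewrite divr_gt0 // mulr_gt0.
have [N HN] := small_inv e0.
have H1 := small (S_trans (inS N.+1) Sz).
have H2 := small (inS N.+1).
have H3 : `|z - ystar| <= `|z - ys N.+1| + `|ystar - ys N.+1|.
  have := ler_normD (z - ys N.+1) (ys N.+1 - ystar).
  by rewrite addrA subrK (distrC (ys N.+1)).
have H4 : lam * `|z - ystar| <= lam * `|z - ys N.+1| + lam * `|ystar - ys N.+1|.
  by rewrite -mulrDr ler_pM2l.
move: H1 H2 H4 HN; set t := (N.+1%:R^-1 : R); set a1 := lam * `|z - ystar|.
set a2 := lam * `|z - _|; set a3 := lam * `|ystar - _|; move=> *; lra.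
Qed.
End Ekeland.
Section DualLemmas.
Variables (R : realType) (X : normedModType R).

Lemma dual0 (u : dual X) : u 0 = 0.
Proof. have := Defs.dlin u 1 0 0; rewrite scale1r addr0 mul1r => H; lra. Qed.

Lemma dualD (u : dual X) y z : u (y + z) = u y + u z.
Proof. by have := Defs.dlin u 1 y z; rewrite scale1r mul1r. Qed.

Lemma dualB (u : dual X) y z : u (y - z) = u y - u z.
Proof. by have := Defs.dlin u (-1) z y; rewrite scaleN1r mulN1r addrC [- u z + _]addrC. Qed.

Lemma dualZ (u : dual X) a y : u (a *: y) = a * u y.
Proof. by have := Defs.dlin u a y 0; rewrite addr0 dual0 addr0. Qed.

Lemma dual_bounded (u : dual X) : exists K, 0 < K /\ forall z, `|u z| <= K * `|z|.
Proof.
have := @Defs.dcont _ _ u 0.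
move/cvgrPdist_lt => /(_ 1 ltr01) /nbhs_ballP [d /= d0 Hd].
exists (2 / d); split; first by rewrite divr_gt0.
move=> z; have [->|zn0] := eqVneq z 0; first by rewrite dual0 !normr0 mulr0.
have s0 : 0 < `|z| by rewrite normr_gt0.
have : ball (0 : X) d ((d / (2 * `|z|)) *: z).
  rewrite -ball_normE /ball_ /= sub0r normrN normrZ gtr0_norm ?divr_gt0 ?mulr_gt0 //.
  have -> : d / (2 * `|z|) * `|z| = d / 2 by field; rewrite lt0r_neq0.
  lra.
move=> /Hd /=; rewrite dual0 sub0r normrN dualZ normrM gtr0_norm ?divr_gt0 ?mulr_gt0 //.
rewrite mulrAC ltr_pdivrMr ?mulr_gt0 // mul1r => H.
rewrite mulrAC ler_pdivlMr // mulrC; exact: ltW.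
Qed.

Lemma lip_cont (g : X -> R) K : (forall x y, `|g x - g y| <= K * `|x - y|) ->
  continuous (g : X -> R^o).
Proof.
move=> gL x; apply/cvgrPdist_lt => e e0; apply/nbhs_ballP.
have K0 : 0 < `|K| + 1 by rewrite ltr_wpDl.
exists (e / (`|K| + 1)); first by rewrite /= divr_gt0.
move=> t; rewrite -ball_normE /ball_ /= ltr_pdivlMr // => H.
have := gL x t; have := ler_norm K; have := normr_ge0 (x - t).
move=> n0 HK H2.
have : K * `|x - t| <= `|K| * `|x - t| by rewrite ler_wpM2r.
move=> H3; rewrite (le_lt_trans H2) //; nra.
Qed.
End DualLemmas.

Section LowerBound.
Variables (R : realType) (X : normedModType R).

Lemma convex_lb (f : X -> \bar R) : lower_semicontinuous f -> proper_fun f ->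
  convex_fun f ->
  exists z0 b K, 0 < K /\ forall y, ((b - K * `|y - z0|)%:E <= f y)%E.
Proof.
move=> lf [fNy [z0 fz0]] cf.
have fz0f : f z0 \is a fin_num by rewrite fin_numE fz0 fNy.
set c := fine (f z0).
have : ((c - 1)%:E < f z0)%E by rewrite -(fineK fz0f) lte_fin /c; lra.
move=> /lf [V /nbhs_ballP [r /= r0 Hr] HV].
exists z0, (c - 1), (2 / r); split; first by rewrite divr_gt0.
move=> y; have [fyf|] := boolP (f y \is a fin_num); last first.
  by rewrite fin_numE negb_and !negbK (negbTE (fNy y)) /= => /eqP ->; exact: leey.
rewrite -(fineK fyf) lee_fin; set fy := fine (f y).
set s := `|y - z0|.
have [sr|rs] := ltP s r.
  have : ball z0 r y by rewrite -ball_normE /ball_ /= distrC.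
  move=> /Hr /HV; rewrite -(fineK fyf) lte_fin -/fy => H.
  have : 0 <= 2 / r * s by rewrite mulr_ge0 ?divr_ge0 ?normr_ge0 // ltW.
  lra.
have s0 : 0 < s by apply: lt_le_trans rs.
set t := r / (2 * s).
have t0 : 0 < t by rewrite divr_gt0 ?mulr_gt0.
have t1 : t < 1.
  by rewrite /t ltr_pdivrMr ?mulr_gt0 // mul1r; lra.
set p := t *: y + (1 - t) *: z0.
have bp : ball z0 r p.
  rewrite -ball_normE /ball_ /=.
  have -> : z0 - p = t *: (z0 - y).
    by rewrite /p scalerBl scale1r scalerBr opprD opprB addrCA [z0 + _]addrC subrK addrC.
  rewrite normrZ gtr0_norm // distrC -/s /t.
  have -> : r / (2 * s) * s = r / 2 by field; rewrite lt0r_neq0.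
  lra.
have := cf y z0 t; rewrite t0 t1 => /(_ isT).
rewrite -(fineK fyf) -(fineK fz0f) -!EFinM -EFinD -/fy -/c => H.
have := HV p (Hr _ bp) => H2.
have := lt_le_trans H2 H; rewrite lte_fin => H3.
have : fy > c - 1 / t.
  have : t * fy > t * c - 1 by lra.
  move=> H4; have -> : c - 1 / t = (t * c - 1) / t by field; rewrite lt0r_neq0.
  by rewrite ltr_pdivrMr // [fy * t]mulrC.
have -> : 1 / t = 2 / r * s by rewrite /t; field; rewrite !lt0r_neq0.
lra.
Qed.
End LowerBound.

Lemma econv_aux (R : realType) (F F1 F2 : \bar R) (r1 r2 t : R) : 0 < t < 1 ->
  F1 != -oo%E -> F2 != -oo%E ->
  (F <= t%:E * F1 + (1 - t)%R%:E * F2)%E ->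
  (F + (t * r1 + (1 - t) * r2)%:E <=
     t%:E * (F1 + r1%:E) + (1 - t)%R%:E * (F2 + r2%:E))%E.
Proof.
move=> /andP[t0 t1]; have t1' : 0 < 1 - t by rewrite subr_gt0.
case: F1 => [x1| |] //; case: F2 => [x2| |] //; case: F => [x| |] //= _ _;
  rewrite ?gt0_mulye //= ?leey //.
all: try by rewrite -!EFinM -!EFinD !lee_fin => H; nra.
all: try by move=> _; rewrite leNye.
all: by move=> _; rewrite ?addye ?addey // ?gt0_muley ?lte_fin // ?addye ?addey // leey.
Qed.

Lemma conv_subE (R : realType) (V : lmodType R) (p a c : V) (t : R) :
  p - (t *: a + (1 - t) *: c) = t *: (p - a) + (1 - t) *: (p - c).
Proof. by rewrite !scalerBr addrACA -scalerDl [t + _]addrC subrK scale1r opprD. Qed.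

Lemma conv_addE (R : realType) (V : lmodType R) (p a c : V) (t : R) :
  p + (t *: a + (1 - t) *: c) = t *: (p + a) + (1 - t) *: (p + c).
Proof. by rewrite !scalerDr addrACA -scalerDl [t + _]addrC subrK scale1r. Qed.

Section Key.
Variables (R : realType) (X : completeNormedModType R) (f : X -> \bar R).
Hypotheses (lf : lower_semicontinuous f) (pf : proper_fun f) (cf : convex_fun f).

Lemma lin_facts (w : X -> R) : (forall a x y, w (a *: x + y) = a * w x + w y) ->
  [/\ w 0 = 0, (forall x y, w (x - y) = w x - w y) & (forall x y, w (x + y) = w x + w y)].
Proof.
move=> wl; have w0 : w 0 = 0 by have := wl 1 0 0; rewrite scale1r addr0 mul1r => H; lra.
split => // x y.
  by have := wl (-1) y x; rewrite scaleN1r mulN1r addrC [- w y + _]addrC.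
by have := wl 1 x y; rewrite scale1r mul1r.
Qed.

Lemma key_subgrad (x : X) (u : dual X) :
  exists y0 (v : dual X), subdiff f y0 v /\ u x <= u y0 + (v x - v y0).
Proof.
have [Ku [Ku0 HKu]] := dual_bounded u.
have [z0 [b [K [K0 HK]]]] := convex_lb lf pf cf.
have [fNy [z1 fz1]] := pf.
have [M [M0 HM]] : exists M, 0 < M /\ M = K + Ku + 1.
  by exists (K + Ku + 1); split => //; lra.
pose g y := - u y + M * `|y - x|.
pose phi y := (f y + (g y)%:E)%E.
have gL : forall a c, `|g a - g c| <= (Ku + M) * `|a - c|.
  move=> a c; rewrite /g.
  have -> : - u a + M * `|a - x| - (- u c + M * `|c - x|) =
            - (u a - u c) + M * (`|a - x| - `|c - x|) by ring.
  rewrite -dualB; apply: le_trans (ler_normD _ _) _.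
  rewrite normrN normrM (gtr0_norm M0).
  have E1 := HKu (a - c).
  have E2 : `|(`|a - x| - `|c - x|)| <= `|a - c|.
    by apply: le_trans (ler_dist_dist _ _) _; rewrite opprB addrA subrK.
  have E3 : M * `|(`|a - x| - `|c - x|)| <= M * `|a - c| by rewrite ler_pM2l.
  rewrite mulrDl; lra.
have lphi : lower_semicontinuous phi.
  by apply: (@lsc_addLip _ _ f g (Ku + M)) => //; rewrite addr_gt0.
pose B := b - K * `|x - z0| - u x.
have phib : forall y, (B%:E <= phi y)%E.
  move=> y; rewrite /phi; have := HK y.
  have [fyf|] := boolP (f y \is a fin_num); last first.
    by rewrite fin_numE negb_and !negbK (negbTE (fNy y)) /= => /eqP -> _; rewrite leey.
  rewrite -(fineK fyf) -EFinD !lee_fin /g => H.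
  have H1 : `|y - z0| <= `|y - x| + `|x - z0|.
    by have := ler_normD (y - x) (x - z0); rewrite addrA subrK.
  have H2 : u y - u x <= Ku * `|y - x|.
    by rewrite -dualB; apply: le_trans (ler_norm _) (HKu _).
  have H3 : K * `|y - z0| <= K * `|y - x| + K * `|x - z0|.
    by rewrite -mulrDr ler_pM2l.
  have H4 := normr_ge0 (y - x).
  have H5 : M * `|y - x| = K * `|y - x| + Ku * `|y - x| + `|y - x| by rewrite HM; ring.
  rewrite /B; move: H H1 H2 H3 H4 H5; set a1 := K * `|y - z0|; set a2 := K * `|y - x|.
  set a3 := K * `|x - z0|; set n1 := `|y - x|; set m1 := M * n1; set k1 := Ku * n1.
  move=> *; lra.
have fz1f : f z1 \is a fin_num by rewrite fin_numE fz1 fNy.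
have fphi1 : phi z1 \is a fin_num by rewrite /phi -(fineK fz1f) -EFinD.
have [ys0 [fys0 Hek]] := ekeland_weak ltr01 lphi phib fphi1.
have fy0f : f ys0 \is a fin_num.
  by move: fys0; rewrite /phi; case: (f ys0).
set c0 := fine (f ys0); set p := ys0 - x.
pose psi (d : X) : \bar R := (f (ys0 + d)%R + (- c0 - u d)%R%:E)%E.
pose U d := M * (`|p - d| - `|p|) + `|d|.
have uZD a y z : u (a *: y + z) = a * u y + u z by exact: Defs.dlin.
have psiconv : forall (a c : X) (t : R), 0 < t < 1 ->
    (psi (t *: a + (1 - t) *: c)%R <= t%:E * psi a + (1 - t)%R%:E * psi c)%E.
  move=> a c t t01; rewrite /psi.
  have -> : ys0 + (t *: a + (1 - t) *: c) = t *: (ys0 + a) + (1 - t) *: (ys0 + c).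
    exact: conv_addE.
  have -> : - c0 - u (t *: a + (1 - t) *: c) =
      t * (- c0 - u a) + (1 - t) * (- c0 - u c).
    rewrite uZD dualZ; ring.
  by apply: econv_aux => //; try exact: fNy; exact: cf _ _ _ t01.
have psi0 : psi 0 = 0%E.
  by rewrite /psi addr0 dual0 subr0 -(fineK fy0f) -EFinD -/c0 addrN.
have Uconv : forall (a c : X) (t : R), 0 < t < 1 ->
    U (t *: a + (1 - t) *: c) <= t * U a + (1 - t) * U c.
  move=> a c t /andP[t0 t1]; have t1' : 0 < 1 - t by rewrite subr_gt0.
  rewrite /U.
  have -> : p - (t *: a + (1 - t) *: c) = t *: (p - a) + (1 - t) *: (p - c).
    exact: conv_subE.
  have N1 := ler_normD (t *: (p - a)) ((1 - t) *: (p - c)).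
  have N2 := ler_normD (t *: a) ((1 - t) *: c).
  rewrite !normrZ !gtr0_norm // in N1 N2.
  have N3 : M * `|t *: (p - a) + (1 - t) *: (p - c)| <=
            M * (t * `|p - a| + (1 - t) * `|p - c|) by rewrite ler_pM2l.
  move: N1 N2 N3; set A := `|t *: (p - a) + _|; set Bn := `|t *: a + _|.
  move=> N1 N2 N3; nra.
have U0 : U 0 = 0 by rewrite /U subr0 subrr mulr0 normr0 addr0.
have Ulip : forall a c, U a - U c <= (M + 1) * `|a - c|.
  move=> a c; rewrite /U.
  have N1 : `|p - a| <= `|p - c| + `|a - c|.
    by have := ler_normD (p - c) (c - a); rewrite addrA subrK (distrC c a).
  have N2 : `|a| <= `|a - c| + `|c|.
    by have := ler_normD (a - c) c; rewrite subrK.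
  have N3 : M * `|p - a| <= M * (`|p - c| + `|a - c|) by rewrite ler_pM2l.
  move: N1 N2 N3; set n1 := `|p - a|; set n2 := `|p - c|; set n3 := `|a - c|.
  move=> *; nra.
have psiU : forall d, ((- U (- d))%:E <= psi d)%E.
  move=> d; have := Hek (ys0 + d); rewrite /phi /psi /U /g.
  have [Ff|] := boolP (f (ys0 + d) \is a fin_num); last first.
    rewrite fin_numE negb_and !negbK (negbTE (fNy _)) /= => /eqP -> _.
    by rewrite addye // leey.
  rewrite -(fineK Ff) -(fineK fy0f) -!EFinD !lee_fin -/c0.
  rewrite opprK normrN [ys0 + d]addrC addrK dualD.
  have -> : d + ys0 - x = p + d by rewrite [d + ys0]addrC addrAC.
  rewrite -/p.
  move=> H; lra.
have [w [wl wpsi wU]] := sandwich psiconv psi0 Uconv U0 Ulip psiU.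
have [w0 wB wD] := lin_facts wl.
have wN z : w (- z) = - w z by rewrite -sub0r wB w0 sub0r.
have wbound : forall z, `|w z| <= (M + 1) * `|z|.
  move=> z; have UB : forall z, U z <= (M + 1) * `|z|.
    move=> z'; rewrite /U.
    have : `|p - z'| <= `|p| + `|z'|.
      by have := ler_normD p (- z'); rewrite normrN.
    move=> H; have : M * `|p - z'| <= M * (`|p| + `|z'|) by rewrite ler_pM2l.
    move=> H2; nra.
  have := wU z; have := wU (- z); rewrite wN; have := UB z; have := UB (- z).
  rewrite normrN => *; rewrite ler_norml; apply/andP; split; lra.
pose vf y := u y + w y.
have vlin : forall a y z, vf (a *: y + z) = a * vf y + vf z.
  by move=> a y z; rewrite /vf uZD wl; ring.
have vcont : continuous (vf : X -> R^o).
  apply: (@lip_cont _ _ vf (Ku + (M + 1))) => a c; rewrite /vf.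
  have -> : u a + w a - (u c + w c) = u (a - c) + w (a - c) by rewrite dualB wB; ring.
  apply: le_trans (ler_normD _ _) _; rewrite mulrDl; apply: lerD; [exact: HKu | exact: wbound].
pose v := @Dual R X vf vlin vcont.
exists ys0, v; split.
  split => // y; rewrite /v /= /vf.
  have := wpsi (y - ys0); rewrite /psi.
  have -> : ys0 + (y - ys0) = y by rewrite addrC subrK.
  have [Fy|] := boolP (f y \is a fin_num); last first.
    by rewrite fin_numE negb_and !negbK (negbTE (fNy _)) /= => /eqP -> _; rewrite leey.
  rewrite -(fineK Fy) -(fineK fy0f) -EFinD !lee_fin -/c0 dualB wB => H.
  lra.
rewrite /v /= /vf.
have := wU p; rewrite /U subrr normr0 => H.
have : w p = w ys0 - w x by rewrite /p wB.
have := normr_ge0 p; have K1 : 1 <= M by rewrite HM; lra.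
move=> n0 E; have : M * `|p| >= `|p| by rewrite ler_peMl.
move=> *; lra.
Qed.
End Key.

Unset Implicit Arguments.

Theorem proposition4p1 (R : realType) (X : completeNormedModType R)
  (f : X -> \bar R) :
  @reflexive_space R X ->
  lower_semicontinuous f -> proper_fun f -> convex_fun f ->
  forall (eps : R) (x : X), 0 <= eps ->
    Tbreve (fitzpatrick (subdiff f)) (eps / 2) x `<=` TSE (subdiff f) eps x.
Proof.
move=> _ lf pf cf eps x eps0 u [Fxu Hw].
set F := fitzpatrick (subdiff f).
have Fge : ((u x)%:E <= F (x, u))%E.
  have [y0 [v [sv ineq]]] := key_subgrad lf pf cf x u.
  apply: le_ereal_sup_tmp; exists ((u y0 + (v x - v y0))%:E); last by rewrite lee_fin.
  by exists y0, v.
have Ffin : F (x, u) \is a fin_num.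
  rewrite fin_numE; apply/andP; split.
    by apply/eqP => E; move: Fge; rewrite E.
  by rewrite -ltey.
rewrite /TSE /conjugate /=; apply: ge_ereal_sup => _ [[w1 w2] _ <-].
have := Hw (w1, w2); rewrite -/F; move: Fge.
rewrite -(fineK Ffin); set r := fine (F (x, u)); rewrite /pairing /=.
case: (F (w1, w2)) => [s| |] /=.
- rewrite !lee_fin => H1 H2; lra.
- by move=> _ _; rewrite leNye.
- by move=> _; rewrite leeNy_eq.
Qed.
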